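(* Let $G$ be an abelian group and let $(V,Y,\mathbf 1,\omega)$ be a simple vertex operator algebra graded by $G$, $V=\bigoplus_{g\in G}V^g$, such that $V^g\neq 0$ for all $g\in G$ and the fusion rules of the $V^0$-modules $V^g$ satisfy $N_{V^g,V^h}^{V^k}=\delta_{g+h,k}$ for all $g,h,k\in G$. Suppose $(V,\bar Y,\mathbf 1,\omega)$ is also a simple vertex operator algebra on the same underlying vector space, with the same vacuum and Virasoro vector, such that $\bar Y(u,z)=Y(u,z)$ for all $u\in V^0$. Then $(V,Y,\mathbf 1,\omega)$ and $(V,\bar Y,\mathbf 1,\omega)$ are isomorphic vertex operator algebras.
   Context: A vertex operator algebra $V$ is graded by an abelian group $G$ if $V=\bigoplus_{g\in G}V^g$ with $u_nv\in V^{g+h}$ for all $u\in V^g$, $v\in V^h$, $n\in\mathbb Z$ (where $Y(u,z)=\sum_n u_nz^{-n-1}$); then $V^0$ is a vertex operator subalgebra and each $V^g$ is a $V^0$-module. For weak modules $W_1,W_2,W_3$ of a vertex operator algebra $U$, an intertwining operator of type $\binom{W_3}{W_1\,W_2}$ is a linear map $I:W_1\to(\mathrm{Hom}(W_2,W_3))\{z\}$, $w\mapsto I(w,z)$ (formal series with complex powers of $z$), such that $I(w_1,z)w_2\in W_3\{z\}$, $[L(-1),I(w_1,z)]=\frac{d}{dz}I(w_1,z)$, and the Jacobi identity $z_0^{-1}\delta\!\left(\frac{z_1-z_2}{z_0}\right)Y(v,z_1)I(w_1,z_2)-z_0^{-1}\delta\!\left(\frac{z_2-z_1}{-z_0}\right)I(w_1,z_2)Y(v,z_1)=z_2^{-1}\delta\!\left(\frac{z_1-z_0}{z_2}\right)I(Y(v,z_0)w_1,z_2)$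 holds for $v\in U$. The fusion rule $N_{W_1,W_2}^{W_3}$ is the dimension of the space of such intertwining operators. *)

(* Defs.v *)
From HB Require Import structures.
From mathcomp Require Import all_boot all_order all_algebra.
From mathcomp Require Import complex.
From mathcomp Require Import Rstruct.
From Stdlib Require Rdefinitions.

Set Implicit Arguments.
Unset Strict Implicit.
Unset Printing Implicit Defensive.

Import Order.TTheory GRing.Theory Num.Theory.
Local Open Scope ring_scope.

Definition C : Type := complex Rdefinitions.R.
HB.instance Definition _ := GRing.Field.on C.

Section VOA.
Variable V : lmodType C.

(* Vertex operators are encoded by their modes:
   Y u n v = u_n v, where Y(u,z) = \sum_{n in Z} u_n z^{-n-1}. *)

Definition gbinom (m : int) (i : nat) : C :=
  (\prod_(j < i) (m%:~R - (j%:R : C))) / (i`!)%:R.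

(* Equality of two formal infinite sums \sum_{i>=0} f i = \sum_{i>=0} g i
   whose terms are eventually zero (all the sums occurring in the componentwise
   Jacobi identities below are of this kind): the partial sums eventually
   agree. *)
Definition series_eq (f g : nat -> V) : Prop :=
  exists N : nat, forall K : nat, (N <= K)%N ->
    \sum_(i < K) f i = \sum_(i < K) g i.

Definition subspace (P : V -> Prop) : Prop :=
  P 0 /\ (forall (a : C) (u v : V), P u -> P v -> P (a *: u + v)).

Definition fin_dim (P : V -> Prop) : Prop :=
  subspace P /\
  exists s : seq V, (forall i, (i < size s)%N -> P (nth 0 s i)) /\
    forall v, P v -> exists c : 'I_(size s) -> C,
      v = \sum_(i < size s) c i *: nth 0 s i.

Definition is_VOA (Y : V -> int -> V -> V) (one omega : V) : Prop :=
  let L := fun (m : int) (v : V) => Y omega (m + 1) v in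
  (forall (a : C) u u' n v, Y (a *: u + u') n v = a *: Y u n v + Y u' n v) /\
  (forall (a : C) u n v v', Y u n (a *: v + v') = a *: Y u n v + Y u n v') /\
  (forall u v, exists N : int, forall n, N <= n -> Y u n v = 0) /\
  (forall n v, Y one n v = if n == (-1)%R then v else 0) /\
  (forall v, (forall n : int, 0 <= n -> Y v n one = 0) /\ Y v (-1) one = v) /\
  (* Jacobi identity, componentwise *)
  (forall u v w (m n k : int),
      series_eq
        (fun i => gbinom m i *: Y (Y u (n + i%:Z) v) (m + k - i%:Z) w)
        (fun i => ((-1) ^+ i * gbinom n i) *:
           (Y u (m + n - i%:Z) (Y v (k + i%:Z) w)
            - ((-1 : C) ^ n) *: Y v (n + k - i%:Z) (Y u (m + i%:Z) w)))) /\
  (exists c : C, forall (m n : int) v,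
      L m (L n v) - L n (L m v)
      = (m - n)%:~R *: L (m + n) v
        + ((if m + n == 0 then ((m ^+ 3 - m)%:~R / 12%:R) * c else 0) *: v)) /\
  (* L(-1)-derivative property: Y(L(-1)v, z) = d/dz Y(v, z) *)
  (forall v (n : int) w, Y (L (-1) v) n w = - (n%:~R) *: Y v (n - 1) w) /\
  (forall v, exists (s : seq int) (f : int -> V),
      (forall n, L 0 (f n) = n%:~R *: f n) /\ v = \sum_(n <- s) f n) /\
  (forall n : int, fin_dim (fun v => L 0 v = n%:~R *: v)) /\
  (exists N : int, forall n : int, n < N ->
      forall v, L 0 v = n%:~R *: v -> v = 0).

Definition is_ideal (Y : V -> int -> V -> V) (P : V -> Prop) : Prop :=
  subspace P /\ forall u w n, P w -> P (Y u n w) /\ P (Y w n u).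

Definition simple_VOA (Y : V -> int -> V -> V) (one omega : V) : Prop :=
  is_VOA Y one omega /\
  forall P, is_ideal Y P -> (forall v, P v -> v = 0) \/ (forall v, P v).

(* V = (+)_{g in G} V^g is a grading of the VOA by the abelian group G.
   We include omega in V^0, so that V^0 is a vertex operator subalgebra
   (with the same vacuum and Virasoro vector). *)
Definition graded_by (G : zmodType) (Y : V -> int -> V -> V) (omega : V)
    (Vg : G -> V -> Prop) : Prop :=
  (forall g, subspace (Vg g)) /\
  (forall v, exists (s : seq G) (f : G -> V),
      (forall g, Vg g (f g)) /\ v = \sum_(g <- s) f g) /\
  (forall (s : seq G) (f : G -> V), uniq s -> (forall g, Vg g (f g)) ->
      \sum_(g <- s) f g = 0 -> forall g, g \in s -> f g = 0) /\
  (forall g h u v n, Vg g u -> Vg h v -> Vg (g + h) (Y u n v)) /\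
  Vg 0 omega.

(* Intertwining operator of type (W3 ; W1 W2) for the vertex operator
   subalgebra U of (V, Y, 1, omega), where U, W1, W2, W3 are subspaces of V
   and the U-module structures are given by restricting Y.
   I w1 p w2 = (w1)_(p) w2, where I(w1,z) = \sum_{p in C} (w1)_(p) z^{-p-1}.
   Only the values on W1 x W2 matter. *)
Definition is_intertwining (Y : V -> int -> V -> V) (omega : V)
    (U W1 W2 W3 : V -> Prop) (I : V -> C -> V -> V) : Prop :=
  (forall (a : C) w1 w1' p w2, W1 w1 -> W1 w1' -> W2 w2 ->
      I (a *: w1 + w1') p w2 = a *: I w1 p w2 + I w1' p w2) /\
  (forall (a : C) w1 p w2 w2', W1 w1 -> W2 w2 -> W2 w2' ->
      I w1 p (a *: w2 + w2') = a *: I w1 p w2 + I w1 p w2') /\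
  (forall w1 p w2, W1 w1 -> W2 w2 -> W3 (I w1 p w2)) /\
  (* lower truncation, needed for the Jacobi identity to make sense *)
  (forall w1 p w2, W1 w1 -> W2 w2 ->
      exists N : nat, forall n : nat, (N <= n)%N -> I w1 (p + n%:R) w2 = 0) /\
  (* [L(-1), I(w1,z)] = d/dz I(w1,z), with L(-1) = omega_0 *)
  (forall w1 p w2, W1 w1 -> W2 w2 ->
      Y omega 0 (I w1 p w2) - I w1 p (Y omega 0 w2) = - p *: I w1 (p - 1) w2) /\
  (forall v w1 w2 (m n : int) (p : C), U v -> W1 w1 -> W2 w2 ->
      series_eq
        (fun i => gbinom m i *: I (Y v (n + i%:Z) w1) (m%:~R + p - i%:R) w2)
        (fun i => ((-1) ^+ i * gbinom n i) *:
           (Y v (m + n - i%:Z) (I w1 (p + i%:R) w2)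
            - ((-1 : C) ^ n) *: I w1 (n%:~R + p - i%:R) (Y v (m + i%:Z) w2)))).

(* The fusion rule N_{W1,W2}^{W3} equals N: the space of intertwining
   operators of type (W3 ; W1 W2) (maps W1 -> Hom(W2,W3){z}, i.e. functions
   identified when they agree on W1 x W2) has dimension N. *)
Definition fusion_rule (Y : V -> int -> V -> V) (omega : V)
    (U W1 W2 W3 : V -> Prop) (N : nat) : Prop :=
  exists B : 'I_N -> (V -> C -> V -> V),
    (forall i, is_intertwining Y omega U W1 W2 W3 (B i)) /\
    (forall c : 'I_N -> C,
       (forall w1 p w2, W1 w1 -> W2 w2 -> \sum_i c i *: B i w1 p w2 = 0) ->
       forall i, c i = 0) /\
    (forall I, is_intertwining Y omega U W1 W2 W3 I ->
       exists c : 'I_N -> C, forall w1 p w2, W1 w1 -> W2 w2 ->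
         I w1 p w2 = \sum_i c i *: B i w1 p w2).

Definition VOA_isomorphic (Y Y' : V -> int -> V -> V) (one omega : V) : Prop :=
  exists f : V -> V,
    (forall (a : C) u v, f (a *: u + v) = a *: f u + f v) /\
    bijective f /\
    f one = one /\ f omega = omega /\
    (forall u n v, f (Y u n v) = Y' (f u) n (f v)).

End VOA.

(* Main.v *)
Require Import Defs.
From HB Require Import structures.
From mathcomp Require Import all_boot all_order all_algebra.
From mathcomp Require Import complex Rstruct.
From mathcomp Require Import zify ring.
From Stdlib Require Import ClassicalEpsilon Classical.
Set Implicit Arguments. Unset Strict Implicit. Unset Printing Implicit Defensive.
Import Order.TTheory GRing.Theory Num.Theory.
Local Open Scope ring_scope.

Lemma Cnat_neq0 (n : nat) : ((n.+1)%:R : C) != 0.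
Proof. have H : ((n.+1)%:R : (Rdefinitions.R)[i]) != 0 by rewrite pnatr_eq0. exact: H. Qed.
Lemma Cint_inj (m n : int) : (m%:~R : C) = n%:~R -> m = n.
Proof. exact: (@intr_inj (Rdefinitions.R)[i] m n). Qed.
Lemma Croot (d : nat) (a : C) : (0 < d)%N -> exists x : C, x ^+ d = a.
Proof.
move=> d0; exists (d.-root (a : (Rdefinitions.R)[i])).
exact: (@rootCK (Rdefinitions.R)[i] d d0 a).
Qed.

Section Series.
Variable V : lmodType C.

Lemma sum_trunc (f : nat -> V) M K : (M <= K)%N ->
  (forall i, (M <= i)%N -> f i = 0) -> \sum_(i < K) f i = \sum_(i < M) f i.
Proof.
move=> MK fM; rewrite -(subnKC MK) big_split_ord /= [X in _ + X]big1 ?addr0 // => i _.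
by apply: fM; rewrite leq_addr.
Qed.

Lemma series_fin (f g : nat -> V) M : series_eq f g ->
  (forall i, (M <= i)%N -> f i = 0) -> (forall i, (M <= i)%N -> g i = 0) ->
  \sum_(i < M) f i = \sum_(i < M) g i.
Proof.
case=> N HN hf hg; have := HN (maxn N M) (leq_maxl _ _).
by rewrite !(@sum_trunc _ M) // leq_maxr.
Qed.

Lemma series_first (f g : nat -> V) M : series_eq f g -> (0 < M)%N ->
  (forall i, (M <= i)%N -> f i = 0) -> (forall i, (1 <= i)%N -> g i = 0) ->
  \sum_(i < M) f i = g 0%N.
Proof.
move=> hs M0 hf hg; rewrite (series_fin hs hf); last first.
  by move=> i Mi; apply: hg; apply: leq_trans Mi.
by rewrite (@sum_trunc _ 1) // big_ord1.
Qed.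

Lemma sum_first (f : nat -> V) K : (0 < K)%N ->
  (forall i, (1 <= i)%N -> f i = 0) -> \sum_(i < K) f i = f 0%N.
Proof. by move=> K0 h; rewrite (@sum_trunc _ 1) // big_ord1. Qed.

Lemma subspace0 (P : V -> Prop) : subspace P -> P 0.
Proof. by case. Qed.
Lemma subspaceD (P : V -> Prop) u v : subspace P -> P u -> P v -> P (u + v).
Proof. by case=> _ h Pu Pv; rewrite -[u]scale1r; apply: h. Qed.
Lemma subspaceZ (P : V -> Prop) a u : subspace P -> P u -> P (a *: u).
Proof. by case=> h0 h Pu; rewrite -[_ *: _]addr0; apply: h. Qed.
Lemma subspaceN (P : V -> Prop) u : subspace P -> P u -> P (- u).
Proof. by move=> sP Pu; rewrite -scaleN1r; apply: subspaceZ. Qed.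
Lemma subspaceB (P : V -> Prop) u v : subspace P -> P u -> P v -> P (u - v).
Proof. by move=> sP Pu Pv; apply: subspaceD => //; apply: subspaceN. Qed.
Lemma subspace_sum (P : V -> Prop) (I : Type) (r : seq I) (F : I -> V) :
  subspace P -> (forall i, P (F i)) -> P (\sum_(i <- r) F i).
Proof.
move=> sP hF; elim: r => [|x r IH]; first by rewrite big_nil; apply: subspace0.
by rewrite big_cons; apply: subspaceD.
Qed.

End Series.

Lemma gbinom0 (m : int) : gbinom m 0 = 1.
Proof. by rewrite /gbinom big_ord0 fact0 divr1. Qed.

Lemma gbinom0S (i : nat) : gbinom 0 i.+1 = 0.
Proof. by rewrite /gbinom big_ord_recl /= subrr !mul0r. Qed.

Section VOAfacts.
Variable V : lmodType C.
Variables (Y : V -> int -> V -> V) (one omega : V).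
Hypothesis HV : is_VOA Y one omega.

Lemma Y0l n v : Y 0 n v = 0.
Proof.
case: HV => lin1 _; have H := lin1 1 0 0 n v.
rewrite !scale1r addr0 in H; apply: (addrI (Y 0 n v)).
by rewrite addr0 -H.
Qed.
Lemma Y0r u n : Y u n 0 = 0.
Proof.
case: HV => _ [lin2 _]; have H := lin2 1 u n 0 0.
rewrite !scale1r addr0 in H; apply: (addrI (Y u n 0)).
by rewrite addr0 -H.
Qed.
Lemma YDl u u' n v : Y (u + u') n v = Y u n v + Y u' n v.
Proof. by case: HV => lin1 _; have := lin1 1 u u' n v; rewrite !scale1r. Qed.
Lemma YDr u n v v' : Y u n (v + v') = Y u n v + Y u n v'.
Proof. by case: HV => _ [lin2 _]; have := lin2 1 u n v v'; rewrite !scale1r. Qed.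
Lemma YZl a u n v : Y (a *: u) n v = a *: Y u n v.
Proof. by case: HV => lin1 _; have := lin1 a u 0 n v; rewrite !addr0 Y0l addr0. Qed.
Lemma YZr a u n v : Y u n (a *: v) = a *: Y u n v.
Proof. by case: HV => _ [lin2 _]; have := lin2 a u n v 0; rewrite !addr0 Y0r addr0. Qed.
Lemma YNl u n v : Y (- u) n v = - Y u n v.
Proof. by rewrite -scaleN1r YZl scaleN1r. Qed.
Lemma YNr u n v : Y u n (- v) = - Y u n v.
Proof. by rewrite -scaleN1r YZr scaleN1r. Qed.
Lemma YBl u u' n v : Y (u - u') n v = Y u n v - Y u' n v.
Proof. by rewrite YDl YNl. Qed.
Lemma YBr u n v v' : Y u n (v - v') = Y u n v - Y u n v'.
Proof. by rewrite YDr YNr. Qed.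
Lemma Ysuml (I : Type) (r : seq I) (F : I -> V) n v :
  Y (\sum_(i <- r) F i) n v = \sum_(i <- r) Y (F i) n v.
Proof.
elim: r => [|x r IH]; first by rewrite !big_nil Y0l.
by rewrite !big_cons YDl IH.
Qed.
Lemma Ysumr (I : Type) (r : seq I) (F : I -> V) u n :
  Y u n (\sum_(i <- r) F i) = \sum_(i <- r) Y u n (F i).
Proof.
elim: r => [|x r IH]; first by rewrite !big_nil Y0r.
by rewrite !big_cons YDr IH.
Qed.

Definition lclosed (P : V -> Prop) := forall a k x, P x -> P (Y a k x).

Lemma cre_closed (P : V -> Prop) : subspace P -> lclosed P ->
  forall (j : nat) y, P y -> P (Y y (- (j%:Z) - 1) one).
Proof.
case: HV => _ [_ [_ [_ [cre [_ [_ [der _]]]]]]] sP lP.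
elim=> [|j IH] y Py.
  by rewrite oppr0 sub0r (proj2 (cre y)).
have H := der y (- (j%:Z) - 1) one.
have E : - (j%:Z) - 1 - 1 = - (j.+1%:Z) - 1 by lia.
rewrite E in H.
have Hj : (- (- (j%:Z) - 1)%:~R : C) = (j.+1)%:R.
  by rewrite -mulrNz (_ : - (- (j%:Z) - 1) = j.+1%:Z) ?pmulrn //; lia.
rewrite Hj in H.
have -> : Y y (- (j.+1%:Z) - 1) one =
          (j.+1)%:R^-1 *: Y (Y omega (-1 + 1) y) (- (j%:Z) - 1) one.
  by rewrite H scalerA mulVf ?scale1r // Cnat_neq0.
by apply: subspaceZ => //; apply: IH; apply: lP.
Qed.

Lemma lclosed_ideal (P : V -> Prop) : subspace P -> lclosed P -> is_ideal Y P.
Proof.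
move=> sP lP; split => // u w n Pw; split; first exact: lP.
have [_ [_ [trunc [_ [cre [jac _]]]]]] := HV.
have [N0 HN0] := trunc u w.
set M := (`|N0 - n|%N).+1.
have E := series_first (M := M) (jac u w one (-1) (n + 1) (-1)) isT.
have H1 : forall i, (M <= i)%N -> gbinom (-1) i *: Y (Y u (n + 1 + i%:Z) w) (-1 + -1 - i%:Z) one = 0.
  by move=> i Mi; rewrite HN0 ?Y0l ?scaler0 //; lia.
have {E H1} := E H1.
have H2 : forall i, (1 <= i)%N -> ((-1) ^+ i * gbinom (n + 1) i) *:
   (Y u (-1 + (n + 1) - i%:Z) (Y w (-1 + i%:Z) one) -
    (-1) ^ (n + 1) *: Y w (n + 1 + -1 - i%:Z) (Y u (-1 + i%:Z) one)) = 0.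
  move=> i i1; rewrite (proj1 (cre w)); last by lia.
  by rewrite (proj1 (cre u)) ?Y0r ?scaler0 ?subr0 ?Y0r ?scaler0 //; lia.
move=> E; have {E H2} := E H2.
rewrite expr0 gbinom0 mul1r scale1r (proj2 (cre w)) (proj2 (cre u)).
have -> : -1 + (n + 1) - (0%N)%:Z = n by lia.
have -> : n + 1 + -1 - (0%N)%:Z = n by lia.
move=> E.
have cn0 : ((-1 : C) ^ (n + 1)) != 0 by rewrite expfz_eq0 negb_and oppr_eq0 oner_eq0 orbT.
have -> : Y w n u = ((-1 : C) ^ (n + 1))^-1 *: (Y u n w -
   \sum_(i < M) gbinom (-1) i *: Y (Y u (n + 1 + (i : nat)%:Z) w) (-1 + -1 - (i : nat)%:Z) one).
  by rewrite E opprB subrKC scalerA mulVf ?scale1r.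
apply: subspaceZ => //; apply: subspaceB => //; first exact: lP.
rewrite -(big_map (@nat_of_ord M) xpredT (fun i : nat => gbinom (-1) i *: Y (Y u (n + 1 + i%:Z) w) (-1 + -1 - i%:Z) one)).
apply: subspace_sum => // i; apply: subspaceZ => //.
have -> : -1 + -1 - (i : nat)%:Z = - ((i.+1)%:Z) - 1 by lia.
by apply: cre_closed => //; apply: lP.
Qed.

Lemma ann_lclosed u : lclosed (fun w => forall j, Y u j w = 0).
Proof.
have [_ [_ [trunc [_ [cre [jac _]]]]]] := HV.
move=> a k w Hw.
have [N0 HN0] := trunc u a; have [K0 HK0] := trunc a w.
set N := `|N0|%N.
suff H : forall d : nat, forall k, K0 - d%:Z <= k -> forall j, Y u j (Y a k w) = 0.
  by apply: (H `|K0 - k|%N); lia.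
elim=> [|d IH] k' hk j.
  by rewrite HK0 ?Y0r //; lia.
have [hk2|hk2] := boolP (K0 - d%:Z <= k'); first exact: IH.
have := series_fin (M := 1) (jac u a w (j - N%:Z) N%:Z k').
rewrite !big_ord1.
move=> E.
have E1 : forall i, (1 <= i)%N -> ((-1) ^+ i * gbinom N i) *:
       (Y u (j - N%:Z + N%:Z - i%:Z) (Y a (k' + i%:Z) w) -
        (-1) ^ N%:Z *: Y a (N%:Z + k' - i%:Z) (Y u (j - N%:Z + i%:Z) w)) = 0.
  move=> i i1; rewrite Hw Y0r scaler0 subr0 IH ?scaler0 //; lia.
have E2 : forall i, gbinom (j - N%:Z) i *: Y (Y u (N%:Z + i%:Z) a) (j - N%:Z + k' - i%:Z) w = 0.
  by move=> i; rewrite HN0 ?Y0l ?scaler0 //; lia.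
move: (E (fun i _ => E2 i) E1); rewrite E2 expr0 gbinom0 mul1r scale1r Hw Y0r scaler0 subr0.
have -> : j - N%:Z + N%:Z - (0%N)%:Z = j by lia.
by have -> : k' + (0%N)%:Z = k' by lia.
Qed.

Lemma comm0 a x k w : Y (Y a 0 x) k w = Y a 0 (Y x k w) - Y x k (Y a 0 w).
Proof.
have [_ [_ [_ [_ [_ [jac _]]]]]] := HV.
have E := series_first (M := 1) (jac a x w 0 0 k) isT.
have H1 : forall i, (1 <= i)%N -> gbinom 0 i *: Y (Y a (0 + i%:Z) x) (0 + k - i%:Z) w = 0.
  by case=> // i _; rewrite gbinom0S scale0r.
have {E H1} := E H1.
have H2 : forall i, (1 <= i)%N -> ((-1) ^+ i * gbinom 0 i) *:
   (Y a (0 + 0 - i%:Z) (Y x (k + i%:Z) w) -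
    (-1) ^ 0 *: Y x (0 + k - i%:Z) (Y a (0 + i%:Z) w)) = 0.
  by case=> // i _; rewrite gbinom0S mulr0 scale0r.
move=> E; have {E H2} := E H2.
rewrite big_ord1 gbinom0 scale1r expr0 mul1r scale1r expr0z scale1r.
by rewrite !(addr0, add0r, subr0).
Qed.

Lemma skew_id u w n M : (0 < M)%N ->
  (forall i, (M <= i)%N -> Y u (n + 1 + i%:Z) w = 0) ->
  \sum_(i < M) gbinom (-1) i *: Y (Y u (n + 1 + (i : nat)%:Z) w) (-1 + -1 - (i : nat)%:Z) one
  = Y u n w - (-1) ^ (n + 1) *: Y w n u.
Proof.
move=> M0 HM.
have [_ [_ [trunc [_ [cre [jac _]]]]]] := HV.
have E := series_first (M := M) (jac u w one (-1) (n + 1) (-1)) M0.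
have H1 : forall i, (M <= i)%N -> gbinom (-1) i *: Y (Y u (n + 1 + i%:Z) w) (-1 + -1 - i%:Z) one = 0.
  by move=> i Mi; rewrite HM ?Y0l ?scaler0.
have {E H1} := E H1.
have H2 : forall i, (1 <= i)%N -> ((-1) ^+ i * gbinom (n + 1) i) *:
   (Y u (-1 + (n + 1) - i%:Z) (Y w (-1 + i%:Z) one) -
    (-1) ^ (n + 1) *: Y w (n + 1 + -1 - i%:Z) (Y u (-1 + i%:Z) one)) = 0.
  move=> i i1; rewrite (proj1 (cre w)); last by lia.
  by rewrite (proj1 (cre u)) ?Y0r ?scaler0 ?subr0 ?Y0r ?scaler0 //; lia.
move=> E; have {E H2} -> := E H2.
rewrite expr0 gbinom0 mul1r scale1r (proj2 (cre w)) (proj2 (cre u)).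
have -> : -1 + (n + 1) - (0%N)%:Z = n by lia.
by have -> : n + 1 + -1 - (0%N)%:Z = n by lia.
Qed.

Lemma assoc_id u v w (M : nat) n0 k L : (0 < L)%N ->
  (forall i : nat, Y u (M%:Z + i%:Z) w = 0) ->
  (forall i : nat, (1 <= i)%N -> Y u (n0 + i%:Z) v = 0) ->
  (forall i : nat, (L <= i)%N -> Y v (k + i%:Z) w = 0) ->
  Y (Y u n0 v) (M%:Z + k) w =
  \sum_(i < L) ((-1) ^+ i * gbinom n0 i) *: Y u (M%:Z + n0 - (i : nat)%:Z) (Y v (k + (i : nat)%:Z) w).
Proof.
move=> L0 Huw Huv Hvw.
have [_ [_ [_ [_ [_ [jac _]]]]]] := HV.
have E := series_fin (M := L) (jac u v w M%:Z n0 k).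
have H1 : forall i, (L <= i)%N -> gbinom M%:Z i *: Y (Y u (n0 + i%:Z) v) (M%:Z + k - i%:Z) w = 0.
  by move=> i Li; rewrite Huv ?Y0l ?scaler0 //; apply: leq_trans Li.
have {E H1} := E H1.
have H2 : forall i, (L <= i)%N -> ((-1) ^+ i * gbinom n0 i) *:
   (Y u (M%:Z + n0 - i%:Z) (Y v (k + i%:Z) w) -
    (-1) ^ n0 *: Y v (n0 + k - i%:Z) (Y u (M%:Z + i%:Z) w)) = 0.
  by move=> i Li; rewrite Hvw // Huw !Y0r scaler0 subr0 scaler0.
move=> E; have {E H2} := E H2.
rewrite (sum_first (f := fun i : nat => gbinom M%:Z i *: Y (Y u (n0 + i%:Z) v) (M%:Z + k - i%:Z) w)) //; last first.
  by move=> i i1; rewrite Huv ?Y0l ?scaler0.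
rewrite gbinom0 scale1r.
have -> : n0 + (0%N)%:Z = n0 by lia.
have -> : M%:Z + k - (0%N)%:Z = M%:Z + k by lia.
move=> ->; apply: eq_bigr => i _.
by rewrite Huw Y0r scaler0 subr0.
Qed.

Lemma max_index u v n1 : Y u n1 v != 0 ->
  exists n0, Y u n0 v != 0 /\ forall i : nat, (1 <= i)%N -> Y u (n0 + i%:Z) v = 0.
Proof.
have [_ [_ [trunc _]]] := HV.
move=> H1; have [N0 HN0] := trunc u v.
have exd : exists d : nat, Y u (N0 - d%:Z) v != 0.
  exists `|N0 - n1|%N.
  have [le|lt] := leP N0 n1; first by rewrite HN0 ?eqxx in H1.
  by have -> : N0 - `|N0 - n1|%N%:Z = n1 by lia.
case: (ex_minnP exd) => d Hd dmin.
exists (N0 - d%:Z); split => // i i1.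
have [le|lt] := leqP d i; first by rewrite HN0 //; lia.
apply/eqP; apply: negbNE; apply/negP => H.
have E : N0 - d%:Z + i%:Z = N0 - (d - i)%N%:Z by lia.
rewrite E in H; have := dmin _ H; lia.
Qed.

End VOAfacts.

Lemma series_eq_ext (V : lmodType C) (f g f' g' : nat -> V) :
  (forall i, f i = f' i) -> (forall i, g i = g' i) -> series_eq f g -> series_eq f' g'.
Proof.
move=> hf hg [N HN]; exists N => K NK.
have -> : \sum_(i < K) f' i = \sum_(i < K) f i by apply: eq_bigr => i _; rewrite hf.
have -> : \sum_(i < K) g' i = \sum_(i < K) g i by apply: eq_bigr => i _; rewrite hg.
exact: HN.
Qed.

Lemma series_eq_map (V : lmodType C) (h : V -> V) (f g : nat -> V) :
  (forall u v, h (u + v) = h u + h v) -> h 0 = 0 ->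
  series_eq f g -> series_eq (fun i => h (f i)) (fun i => h (g i)).
Proof.
move=> hD h0 [N HN]; exists N => K NK.
rewrite -!(big_morph h hD h0); congr h; exact: HN.
Qed.

Lemma series_eq0 (V : lmodType C) (f g : nat -> V) :
  (forall i, f i = 0) -> (forall i, g i = 0) -> series_eq f g.
Proof. by move=> hf hg; exists 0%N => K _; rewrite !big1. Qed.


Lemma nonvanish (V : lmodType C) (Y : V -> int -> V -> V) (one omega : V) :
  simple_VOA Y one omega -> forall u v, u <> 0 -> v <> 0 -> exists n, Y u n v <> 0.
Proof.
move=> [HV Hs] u v u0 v0; apply: NNPP => H.
have Hall : forall n, Y u n v = 0.
  by move=> n; apply: NNPP => Hn; apply: H; exists n.
have sP : subspace (fun w => forall j, Y u j w = 0).
  split; first by move=> j; rewrite (Y0r HV).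
  have [_ [lin2 _]] := HV.
  by move=> a x y hx hy j; rewrite lin2 hx hy scaler0 addr0.
have := Hs _ (lclosed_ideal HV sP (ann_lclosed (u:=u) HV)).
case=> [H0|H1]; first by apply: v0; apply: H0.
have [_ [_ [_ [_ [cre _]]]]] := HV.
by apply: u0; rewrite -(proj2 (cre u)); apply: H1.
Qed.

Section Grading.
Variables (G : zmodType) (V : lmodType C) (Vg : G -> V -> Prop).
Hypothesis sub : forall g, subspace (Vg g).
Hypothesis span : forall v, exists (s : seq G) (f : G -> V),
      (forall g, Vg g (f g)) /\ v = \sum_(g <- s) f g.
Hypothesis indep : forall (s : seq G) (f : G -> V), uniq s -> (forall g, Vg g (f g)) ->
      \sum_(g <- s) f g = 0 -> forall g, g \in s -> f g = 0.

Lemma sum_ext (f : G -> V) (s t : seq G) : uniq s -> uniq t -> {subset s <= t} ->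
  (forall g, g \notin s -> f g = 0) -> \sum_(g <- t) f g = \sum_(g <- s) f g.
Proof.
move=> us ut st f0; rewrite (bigID (mem s)) /= [X in _ + X]big1 ?addr0; last first.
  by move=> g /= /f0.
rewrite -big_filter; apply: perm_big; apply: uniq_perm; rewrite ?filter_uniq //.
by move=> x; rewrite mem_filter; case xs: (x \in s) => //=; rewrite st.
Qed.

Lemma sum_indep (f : G -> V) (s t : seq G) : uniq s -> uniq t ->
  (forall g, g \notin s -> f g = 0) -> (forall g, g \notin t -> f g = 0) ->
  \sum_(g <- s) f g = \sum_(g <- t) f g.
Proof.
move=> us ut fs ft.
rewrite -(@sum_ext f s (undup (s ++ t))) ?undup_uniq //; last first.
  by move=> x xs; rewrite mem_undup mem_cat xs.
rewrite (@sum_ext f t (undup (s ++ t))) ?undup_uniq //.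
by move=> x xs; rewrite mem_undup mem_cat xs orbT.
Qed.

Definition decomp (v : V) (f : G -> V) (s : seq G) :=
  [/\ uniq s, (forall g, g \notin s -> f g = 0), (forall g, Vg g (f g)) &
      v = \sum_(g <- s) f g].

Lemma decomp0 : decomp 0 (fun _ => 0) [::].
Proof. by split=> // [g|]; [apply: subspace0|rewrite big_nil]. Qed.

Lemma decomp1 g x : Vg g x -> decomp x (fun h => if h == g then x else 0) [:: g].
Proof.
move=> xg; split=> //.
- by move=> h; rewrite inE => /negbTE ->.
- by move=> h; case: eqP => [->//|_]; apply: subspace0.
- by rewrite big_cons big_nil eqxx addr0.
Qed.

Lemma decompD v1 f1 s1 v2 f2 s2 : decomp v1 f1 s1 -> decomp v2 f2 s2 ->
  decomp (v1 + v2) (fun g => f1 g + f2 g) (undup (s1 ++ s2)).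
Proof.
case=> u1 o1 i1 e1 [u2 o2 i2 e2]; split; rewrite ?undup_uniq //.
- by move=> g; rewrite mem_undup mem_cat negb_or => /andP[/o1 -> /o2 ->]; rewrite addr0.
- by move=> g; apply: subspaceD.
rewrite big_split /= e1 e2 (@sum_ext f1 s1) ?undup_uniq //; last first.
  by move=> x xs; rewrite mem_undup mem_cat xs.
rewrite (@sum_ext f2 s2) ?undup_uniq //.
by move=> x xs; rewrite mem_undup mem_cat xs orbT.
Qed.

Lemma decompZ a v f s : decomp v f s -> decomp (a *: v) (fun g => a *: f g) s.
Proof.
case=> u o i e; split=> //.
- by move=> g /o ->; rewrite scaler0.
- by move=> g; apply: subspaceZ.
by rewrite e scaler_sumr.
Qed.

Lemma decomp_exists v : exists f s, decomp v f s.
Proof.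
have [s [f [hf ->]]] := span v.
elim: s => [|x s [f' [s' IH]]]; first by exists (fun _ => 0), [::]; rewrite big_nil; exact: decomp0.
rewrite big_cons; eexists; eexists; apply: decompD IH; exact: decomp1.
Qed.

Lemma decomp_uniq v f1 s1 f2 s2 : decomp v f1 s1 -> decomp v f2 s2 -> forall g, f1 g = f2 g.
Proof.
move=> d1 d2 g.
have := decompD d1 (decompZ (-1) d2); rewrite scaleN1r subrr.
case=> u o i e.
apply/eqP; rewrite -subr_eq0 -scaleN1r; apply/eqP.
have [gin|gout] := boolP (g \in undup (s1 ++ s2)).
  by apply: (indep u i (esym e)).
exact: o.
Qed.

Definition dec (v : V) : G -> V :=
  projT1 (constructive_indefinite_description _ (decomp_exists v)).

Definition pi (g : G) (v : V) : V := dec v g.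

Lemma pi_decomp v : exists s, decomp v (fun g => pi g v) s.
Proof.
rewrite /pi /dec.
have := projT2 (constructive_indefinite_description _ (decomp_exists v)).
by case=> s d; exists s.
Qed.

Lemma pi_eq v f s : decomp v f s -> forall g, pi g v = f g.
Proof. by move=> d g; have [s' d'] := pi_decomp v; exact: (decomp_uniq d' d). Qed.

Lemma pi_in g v : Vg g (pi g v).
Proof. by have [s [_ _ i _]] := pi_decomp v. Qed.

Lemma pi_lin g a u v : pi g (a *: u + v) = a *: pi g u + pi g v.
Proof.
have [s1 d1] := pi_decomp u; have [s2 d2] := pi_decomp v.
exact: (pi_eq (decompD (decompZ a d1) d2)).
Qed.

Lemma piD g u v : pi g (u + v) = pi g u + pi g v.
Proof. by have := pi_lin g 1 u v; rewrite !scale1r. Qed.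

Lemma pi0 g : pi g 0 = 0.
Proof. by rewrite (pi_eq decomp0). Qed.

Lemma piZ g a u : pi g (a *: u) = a *: pi g u.
Proof. by have := pi_lin g a u 0; rewrite !addr0 pi0 addr0. Qed.

Lemma piN g u : pi g (- u) = - pi g u.
Proof. by rewrite -scaleN1r piZ scaleN1r. Qed.

Lemma piB g u v : pi g (u - v) = pi g u - pi g v.
Proof. by rewrite piD piN. Qed.

Lemma pi_sum g (I : Type) (r : seq I) (F : I -> V) :
  pi g (\sum_(i <- r) F i) = \sum_(i <- r) pi g (F i).
Proof.
elim: r => [|x r IH]; first by rewrite !big_nil pi0.
by rewrite !big_cons piD IH.
Qed.

Lemma pi_homog k x : Vg k x -> forall g, pi g x = if g == k then x else 0.
Proof. by move=> xk g; rewrite (pi_eq (decomp1 xk)). Qed.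

Lemma pi_char k x : (forall g, g != k -> pi g x = 0) -> Vg k x.
Proof.
move=> h; have [s [_ _ i ->]] := pi_decomp x.
apply: subspace_sum => // g; have [->|gk] := eqVneq g k; first exact: pi_in.
by rewrite h //; apply: subspace0.
Qed.

Lemma pi_zero x : (forall g, pi g x = 0) -> x = 0.
Proof.
move=> h; have [s [_ _ i ->]] := pi_decomp x.
by rewrite big1 // => g _; rewrite h.
Qed.

Lemma Vg_inj k l x : k != l -> Vg k x -> Vg l x -> x = 0.
Proof. by move=> kl xk xl; have := pi_homog xk k; rewrite eqxx (pi_homog xl) (negbTE kl). Qed.

End Grading.

Definition isint (p : C) := exists n : int, p = n%:~R.

Definition intof (p : C) : int :=
  match excluded_middle_informative (isint p) with
  | left H => projT1 (constructive_indefinite_description _ H)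
  | right _ => 0
  end.

Lemma intofE (n : int) : intof n%:~R = n.
Proof.
rewrite /intof; case: excluded_middle_informative => [H|H]; last first.
  by exfalso; apply: H; exists n.
case: (constructive_indefinite_description _ H) => m /= E.
by apply: Cint_inj.
Qed.

Lemma isint_int (n : int) : isint n%:~R.
Proof. by exists n. Qed.

Lemma isint_shift (p : C) (z : int) : isint (p + z%:~R) -> isint p.
Proof. by case=> n E; exists (n - z); rewrite intrB -E addrK. Qed.

Lemma isint_eq (a b : C) : a = b -> isint a -> isint b.
Proof. by move=> ->. Qed.

Lemma natr_int (R : pzRingType) (i : nat) : (i%:R : R) = (i%:Z)%:~R.
Proof. by rewrite pmulrn. Qed.

Section Intw.
Variables (G : zmodType) (V : lmodType C) (Vg : G -> V -> Prop).
Variables (Y Z : V -> int -> V -> V) (one omega : V).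
Hypothesis sub : forall g, subspace (Vg g).
Hypothesis span : forall v, exists (s : seq G) (f : G -> V),
      (forall g, Vg g (f g)) /\ v = \sum_(g <- s) f g.
Hypothesis indep : forall (s : seq G) (f : G -> V), uniq s -> (forall g, Vg g (f g)) ->
      \sum_(g <- s) f g = 0 -> forall g, g \in s -> f g = 0.
Hypothesis grY : forall g h u v n, Vg g u -> Vg h v -> Vg (g + h) (Y u n v).
Hypothesis om0 : Vg 0 omega.
Hypothesis HY : is_VOA Y one omega.
Hypothesis HZ : is_VOA Z one omega.
Hypothesis agree : forall u, Vg 0 u -> forall n v, Z u n v = Y u n v.

Local Notation PI := (pi sub span).

Lemma pi_Y0 x n v g : Vg 0 x -> PI g (Y x n v) = Y x n (PI g v).
Proof.
move=> x0; have [s d] := pi_decomp sub span v; case: d => u o i e.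
apply: (pi_eq sub span indep (s := s) (f := fun h => Y x n (PI h v))); split => //.
- by move=> h /o ->; rewrite (Y0r HY).
- by move=> h; have := grY n x0 (i h); rewrite add0r.
- by rewrite -(Ysumr HY) -e.
Qed.

Definition IZ (k : G) (w1 : V) (p : C) (w2 : V) : V :=
  if excluded_middle_informative (isint p) then PI k (Z w1 (intof p) w2) else 0.

Lemma IZ_int k w1 (n : int) w2 : IZ k w1 n%:~R w2 = PI k (Z w1 n w2).
Proof.
rewrite /IZ; destruct (excluded_middle_informative _) as [Hi|H]; first by rewrite intofE.
by exfalso; apply: H; exists n.
Qed.

Lemma IZ_nonint k w1 p w2 : ~ isint p -> IZ k w1 p w2 = 0.
Proof. by rewrite /IZ; destruct (excluded_middle_informative _). Qed.

Lemma IZ_intw g h k : is_intertwining Y omega (Vg 0) (Vg g) (Vg h) (Vg k) (IZ k).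
Proof.
have [lin1 [lin2 [trunc [_ [_ [jac [_ [der _]]]]]]]] := HZ.
split; [|split; [|split; [|split; [|split]]]].
- move=> a w1 w1' p w2 _ _ _; have [[q ->]|np] := classic (isint p).
    by rewrite !IZ_int lin1 pi_lin.
  by rewrite !IZ_nonint // scaler0 addr0.
- move=> a w1 p w2 w2' _ _ _; have [[q ->]|np] := classic (isint p).
    by rewrite !IZ_int lin2 pi_lin.
  by rewrite !IZ_nonint // scaler0 addr0.
- move=> w1 p w2 _ _; have [[q ->]|np] := classic (isint p).
    by rewrite IZ_int; apply: pi_in.
  by rewrite IZ_nonint //; apply: subspace0.
- move=> w1 p w2 _ _; have [[q ->]|np] := classic (isint p).
    have [N0 HN0] := trunc w1 w2.
    exists `|N0 - q|%N => n Nn.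
    rewrite natr_int -intrD IZ_int HN0 ?pi0 //; lia.
  exists 0%N => n _; rewrite IZ_nonint // => H; apply: np.
  by apply: (isint_shift (z := n%:Z)); rewrite -natr_int.
- move=> w1 p w2 _ _; have [[q ->]|np] := classic (isint p).
    rewrite -[_ - 1](intrB _ q 1) !IZ_int -!pi_Y0 // -piB //.
    rewrite -!agree // -(comm0 HZ).
    have := der w1 q w2; rewrite (_ : -1 + 1 = 0) // => ->.
    by rewrite piZ.
  rewrite !IZ_nonint ?(Y0r HY) ?subr0 ?scaler0 //.
  by move=> H; apply: np; apply: (isint_shift (z := -1)); rewrite intrN.
- move=> v w1 w2 m n p v0 _ _; have [[q ->]|np] := classic (isint p).
    apply: (series_eq_ext (f := fun i => PI k (gbinom m i *: Z (Z v (n + i%:Z) w1) (m + q - i%:Z) w2))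
                          (g := fun i => PI k (((-1) ^+ i * gbinom n i) *:
           (Z v (m + n - i%:Z) (Z w1 (q + i%:Z) w2)
            - ((-1 : C) ^ n) *: Z w1 (n + q - i%:Z) (Z v (m + i%:Z) w2))))).
    + by move=> i; rewrite piZ // -[(i%:R : C)]/((i%:Z)%:~R) -intrD -intrB IZ_int (agree v0).
    + move=> i; rewrite piZ // piB // piZ // -[(i%:R : C)]/((i%:Z)%:~R) -!intrD -!intrB !IZ_int.
      by rewrite !(agree v0) !pi_Y0.
    apply: series_eq_map; [exact: piD|exact: pi0|exact: jac].
  apply: series_eq0 => i.
    rewrite IZ_nonint ?scaler0 // => H; apply: np.
    apply: (isint_shift (z := m - i%:Z)); apply: (isint_eq _ H).
    rewrite intrB -[(i%:R : C)]/((i%:Z)%:~R); ring.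
  rewrite !IZ_nonint ?(Y0r HY) ?(Y0r HZ) ?scaler0 ?subr0 ?scaler0 //.
  + move=> H; apply: np; apply: (isint_shift (z := n - i%:Z)); apply: (isint_eq _ H).
    rewrite intrB -[(i%:R : C)]/((i%:Z)%:~R); ring.
  + move=> H; apply: np; apply: (isint_shift (z := i%:Z)); apply: (isint_eq _ H).
    by rewrite -[(i%:R : C)]/((i%:Z)%:~R).
Qed.

End Intw.

From mathcomp Require Import classical_sets boolp.
Local Open Scope ring_scope.

Section Split.
Variables (G : zmodType) (c : G -> G -> C).
Hypothesis cnz : forall g h, c g h != 0.
Hypothesis c0 : forall g, c g 0 = 1.
Hypothesis csym : forall g h, c g h = c h g.
Hypothesis ccoc : forall g h l, c g h * c (g + h) l = c h l * c g (h + l).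

Lemma c0l g : c 0 g = 1. Proof. by rewrite csym c0. Qed.

Definition Et := {p : G * C | p.2 != 0}.
HB.instance Definition _ := SubChoice.copy Et {p : G * C | p.2 != 0}.

Definition Eadd (x y : Et) : Et :=
  exist _ ((val x).1 + (val y).1, (val x).2 * (val y).2 * c (val x).1 (val y).1)
    (mulf_neq0 (mulf_neq0 (valP x) (valP y)) (cnz _ _)).
Definition Ezero : Et := exist _ (0, 1) (oner_neq0 C).
Definition Eopp (x : Et) : Et :=
  exist _ (- (val x).1, ((val x).2 * c (val x).1 (- (val x).1))^-1)
    (invr_neq0 (mulf_neq0 (valP x) (cnz _ _))).

Lemma EaddA : associative Eadd.
Proof.
move=> [[x1 x2] hx] [[y1 y2] hy] [[z1 z2] hz]; apply: val_inj => /=.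
congr pair; first by rewrite addrA.
have H := ccoc x1 y1 z1.
transitivity (x2 * y2 * z2 * (c y1 z1 * c x1 (y1 + z1))); first by ring.
by rewrite -H; ring.
Qed.

Lemma EaddC : commutative Eadd.
Proof.
move=> [[x1 x2] hx] [[y1 y2] hy]; apply: val_inj => /=.
by congr pair; [rewrite addrC|rewrite csym; ring].
Qed.

Lemma Eadd0 : left_id Ezero Eadd.
Proof.
move=> [[x1 x2] hx]; apply: val_inj => /=.
by congr pair; [rewrite add0r|rewrite c0l; ring].
Qed.

Lemma EaddN : left_inverse Ezero Eopp Eadd.
Proof.
move=> [[x1 x2] hx]; apply: val_inj => /=.
congr pair; first by rewrite addNr.
rewrite (csym (- x1)) -mulrA mulVf //.
exact: (mulf_neq0 hx (cnz _ _)).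
Qed.

HB.instance Definition _ := GRing.isZmodule.Build Et EaddA EaddC Eadd0 EaddN.

Definition pr (x : Et) : G := (val x).1.
Definition sc (x : Et) : C := (val x).2.

Lemma sc_neq0 x : sc x != 0. Proof. exact: valP x. Qed.

Lemma valD (x y : Et) : val (x + y) = (pr x + pr y, sc x * sc y * c (pr x) (pr y)).
Proof. by []. Qed.
Lemma val0 : val (0 : Et) = (0, 1). Proof. by []. Qed.

Lemma Eeq (x y : Et) : pr x = pr y -> sc x = sc y -> x = y.
Proof.
move: x y => [[x1 x2] hx] [[y1 y2] hy] /= e1 e2; apply: val_inj => /=.
by rewrite /pr /sc /= in e1 e2; rewrite e1 e2.
Qed.

Lemma prD x y : pr (x + y) = pr x + pr y. Proof. by []. Qed.
Lemma scD x y : sc (x + y) = sc x * sc y * c (pr x) (pr y). Proof. by []. Qed.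
Lemma pr0 : pr 0 = 0. Proof. by []. Qed.
Lemma sc0 : sc 0 = 1. Proof. by []. Qed.
Lemma prN x : pr (- x) = - pr x.
Proof. by apply: (addIr (pr x)); rewrite -prD !addNr. Qed.
Lemma prB x y : pr (x - y) = pr x - pr y. Proof. by rewrite prD prN. Qed.
Lemma prMn x n : pr (x *+ n) = pr x *+ n.
Proof. by elim: n => [|n IH]; rewrite ?mulr0n ?pr0 // !mulrS prD IH. Qed.
Lemma prMz x j : pr (x *~ j) = pr x *~ j.
Proof. by case: j => n; rewrite ?NegzE ?mulrNz ?prN prMn. Qed.

Definition kE (a : C) : Et := insubd (0 : Et) (0, a).

Lemma pr_kE a : pr (kE a) = 0.
Proof. by rewrite /pr /kE val_insubd; case: ifP. Qed.
Lemma sc_kE a : a != 0 -> sc (kE a) = a.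
Proof. by move=> a0; rewrite /sc /kE val_insubd /= a0. Qed.

Lemma ker_kE y : pr y = 0 -> y = kE (sc y).
Proof. by move=> py; apply: Eeq; rewrite ?pr_kE ?sc_kE ?sc_neq0. Qed.

Lemma kE1 : kE 1 = 0.
Proof. by apply: Eeq; rewrite ?pr_kE ?sc_kE ?oner_neq0. Qed.

Lemma kED a b : a != 0 -> b != 0 -> kE a + kE b = kE (a * b).
Proof.
move=> a0 b0; apply: Eeq; first by rewrite prD !pr_kE addr0.
by rewrite scD !sc_kE ?mulf_neq0 // !pr_kE c0 mulr1.
Qed.

Lemma kEMn a n : a != 0 -> kE a *+ n = kE (a ^+ n).
Proof.
move=> a0; elim: n => [|n IH]; first by rewrite mulr0n expr0 kE1.
by rewrite mulrS IH kED ?expf_neq0 // exprS.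
Qed.

Lemma addkE x b : b != 0 -> pr (x + kE b) = pr x /\ sc (x + kE b) = sc x * b.
Proof. by move=> b0; rewrite prD scD pr_kE sc_kE // c0 mulr1 addr0. Qed.

Definition lft (g : G) : Et := insubd (0 : Et) (g, 1).
Lemma pr_lft g : pr (lft g) = g.
Proof. by rewrite /pr /lft val_insubd /= oner_neq0. Qed.

Definition Psec (S : set Et) :=
  (forall x y, S x -> S y -> S (x - y)) /\ (forall y, S y -> pr y = 0 -> y = 0).

Lemma Psec_chain : forall F : set (set Et),
  (F `<=` Psec)%classic -> total_on F subset -> Psec (\bigcup_(X in F) X)%classic.
Proof.
move=> F FP tot; split.
  move=> x y [X FX Xx] [Y FY Yy].
  have [XY|YX] := tot X Y FX FY.
    by exists Y => //; apply: (proj1 (FP Y FY)) => //; apply: XY.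
  by exists X => //; apply: (proj1 (FP X FX)) => //; apply: YX.
by move=> y [X FX Xy]; apply: (proj2 (FP X FX)).
Qed.

Section Max.
Variable S : set Et.
Hypothesis PS : Psec S.
Hypothesis Smax : forall B : set Et, (S `<` B)%classic -> ~ Psec B.

Definition S0 (y : Et) := y = 0 \/ S y.

Lemma S0B x y : S0 x -> S0 y -> S0 (x - y).
Proof.
have [cl _] := PS.
case=> [->|Sx] [->|Sy]; rewrite ?subr0; try by left.
- right; have := cl _ _ (cl _ _ Sy Sy) Sy; rewrite subrr; by rewrite sub0r.
- by right.
- by right; apply: cl.
Qed.

Lemma S00 : S0 0. Proof. by left. Qed.
Lemma S0N x : S0 x -> S0 (- x).
Proof. by move=> Sx; rewrite -sub0r; apply: S0B => //; left. Qed.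
Lemma S0D x y : S0 x -> S0 y -> S0 (x + y).
Proof. by move=> Sx Sy; rewrite -[y]opprK; apply: S0B => //; apply: S0N. Qed.
Lemma S0Mn x n : S0 x -> S0 (x *+ n).
Proof. by move=> Sx; elim: n => [|n IH]; rewrite ?mulr0n; [left|rewrite mulrS; apply: S0D]. Qed.
Lemma S0Mz x j : S0 x -> S0 (x *~ j).
Proof. by move=> Sx; case: j => n; rewrite ?NegzE ?mulrNz; [|apply: S0N]; apply: S0Mn. Qed.
Lemma S0triv y : S0 y -> pr y = 0 -> y = 0.
Proof. by case=> [->//|Sy]; apply: (proj2 PS). Qed.

Definition Dx (x : G) (j : int) := exists s, S0 s /\ pr s = x *~ j.

Lemma ext_contra x e : pr e = x -> ~ (exists y, S y /\ pr y = x) ->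
  (forall j, Dx x j -> S0 (e *~ j)) -> False.
Proof.
move=> pe nx Kp.
pose B : set Et := fun y => exists s j, S0 s /\ y = s + e *~ j.
apply: (Smax (B := B)).
  split.
    by move=> y Sy; exists y, 0; split; [right|rewrite mulr0z addr0].
  move=> BS; apply: nx; exists e; split => //; apply: BS.
  by exists 0, 1; split; [left|rewrite add0r mulr1z].
split.
  move=> y z [s1 [j1 [S1 ->]]] [s2 [j2 [S2 ->]]].
  exists (s1 - s2), (j1 - j2); split; first exact: S0B.
  by rewrite mulrzBr opprD addrACA.
move=> y [s [j [Ss ->]]] py.
have Dj : Dx x j.
  exists (- s); split; first exact: S0N.
  by rewrite prN; move: py; rewrite prD prMz pe => /eqP; rewrite addr_eq0 => /eqP ->; rewrite opprK.
have := S0triv (S0D Ss (Kp _ Dj)) py; by [].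
Qed.

Lemma surj_sec g : exists y, S0 y /\ pr y = g.
Proof.
apply: NNPP => ng.
have nx : ~ (exists y, S y /\ pr y = g) by case=> y [Sy py]; apply: ng; exists y; split; [right|].
have [[j [jn0 Dj]]|nD] := pselect (exists j, j != 0 /\ Dx g j); last first.
  apply: (ext_contra (pr_lft g) nx) => j Dj.
  have [->|jn0] := eqVneq j 0; first by rewrite mulr0z; left.
  by exfalso; apply: nD; exists j.
have exd : exists d : nat, (0 < d)%N && `[< Dx g d%:Z >].
  exists `|j|%N; apply/andP; split; first by rewrite absz_gt0.
  apply/asboolP; case: Dj => s [Ss ps].
  have [jp|jn] := ltP 0 j.
    by exists s; rewrite gtz0_abs.
  exists (- s); split; first exact: S0N.
  by rewrite prN ps lez0_abs // mulrNz.
case: (ex_minnP exd) => d /andP[d0 /asboolP Dd] dmin.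
case: Dd => sd [Ssd psd].
set e0 := lft g.
set y0 := e0 *~ d%:Z - sd.
have py0 : pr y0 = 0 by rewrite /y0 prB prMz pr_lft psd subrr.
set mu := sc y0.
have mu0 : mu != 0 := sc_neq0 y0.
have [la hla] := Croot (mu^-1) d0.
have la0 : la != 0.
  apply/eqP => E; move: hla; rewrite E expr0n eqn0Ngt d0 /= => /esym/eqP.
  by rewrite invr_eq0 (negbTE mu0).
set e := e0 + kE la.
have pe : pr e = g by rewrite /e (proj1 (addkE _ la0)) pr_lft.
have de : e *~ d%:Z = sd.
  rewrite /e mulrzDl.
  have -> : e0 *~ d%:Z = sd + kE mu.
    by rewrite -(ker_kE py0) /y0 addrC subrK.
  by rewrite -pmulrn (kEMn _ la0) hla -addrA kED ?invr_neq0 // mulfV // kE1 addr0.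
apply: (ext_contra pe nx) => k [s [Ss ps]].
have kE' := divz_eq k d%:Z.
set q := (k %/ d%:Z)%Z in kE'; set r := (k %% d%:Z)%Z in kE'.
have r0 : 0 <= r by apply: modz_ge0; rewrite eqz_nat -lt0n.
have rd : r < d%:Z by rewrite ltz_pmod // ltz_nat.
have Dr : Dx g r.
  exists (s - sd *~ q); split; first by apply: S0B => //; apply: S0Mz.
  rewrite prB prMz ps psd mulrzA_C -mulrzBr; congr (_ *~ _).
have r00 : r = 0.
  apply: NNPP => rn0.
  have rpos : (0 < `|r|)%N by rewrite absz_gt0; apply/eqP.
  have := dmin `|r|%N; rewrite rpos /= gez0_abs // => /(_ (asboolT Dr)).
  by move=> dr; move: rd; rewrite -(gez0_abs r0) ltz_nat ltnNge dr.
rewrite kE' r00 addr0 mulrC mulrzA de; exact: S0Mz.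
Qed.

End Max.

Lemma split_cocycle : exists phi : G -> C, (forall g, phi g != 0) /\ (forall g h, phi (g + h) = c g h * phi g * phi h).
Proof.
have [S [PS Smax]] := Zorn_bigcup Psec_chain.
pose y g := proj1_sig (cid (surj_sec PS Smax g)).
have yP g : S0 S (y g) /\ pr (y g) = g.
  exact: (proj2_sig (cid (surj_sec PS Smax g))).
exists (fun g => sc (y g)); split; first by move=> g; apply: sc_neq0.
move=> g h.
have E : y g + y h - y (g + h) = 0.
  apply: (S0triv PS).
    exact: (S0B PS (S0D PS (proj1 (yP g)) (proj1 (yP h))) (proj1 (yP (g + h)))).
  by rewrite prB prD !(proj2 (yP _)) subrr.
move/eqP: E; rewrite subr_eq0 => /eqP E.
have := congr1 sc E; rewrite scD !(proj2 (yP _)) => <-.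
by rewrite mulrC mulrA.
Qed.

End Split.

Section Main.
Variables (G : zmodType) (V : lmodType C) (Y Ybar : V -> int -> V -> V) (one omega : V)
  (Vg : G -> V -> Prop).
Hypothesis HsY : simple_VOA Y one omega.
Hypothesis HG : graded_by Y omega Vg.
Hypothesis Hne : forall g : G, exists v, Vg g v /\ v <> 0.
Hypothesis Hfus : forall g h k : G,
  fusion_rule Y omega (Vg 0) (Vg g) (Vg h) (Vg k) (if g + h == k then 1%N else 0%N).
Hypothesis HsZ : simple_VOA Ybar one omega.
Hypothesis agree : forall u, Vg 0 u -> forall (n : int) (v : V), Ybar u n v = Y u n v.

Let HY : is_VOA Y one omega := proj1 HsY.
Let HZ : is_VOA Ybar one omega := proj1 HsZ.
Let sub := proj1 HG.
Let span := proj1 (proj2 HG).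
Let indep := proj1 (proj2 (proj2 HG)).
Let grY := proj1 (proj2 (proj2 (proj2 HG))).
Let om0 := proj2 (proj2 (proj2 (proj2 HG))).

Local Notation PI := (pi sub span).

Lemma pi_Yl0 x n v g : Vg 0 v -> PI g (Y x n v) = Y (PI g x) n v.
Proof.
move=> v0; have [s d] := pi_decomp sub span x; case: d => u o i e.
apply: (pi_eq sub span indep (s := s) (f := fun h => Y (PI h x) n v)); split => //.
- by move=> h /o ->; rewrite (Y0l HY).
- by move=> h; have := grY n (i h) v0; rewrite addr0.
- by rewrite -(Ysuml HY) -e.
Qed.

Lemma one0 : Vg 0 one.
Proof.
apply: (pi_char (sub := sub) (span := span)) => g g0.
have [v [v0 vn0]] := Hne 0.
apply: NNPP => ne.
have [n hn] := nonvanish HsY ne vn0.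
apply: hn; rewrite -pi_Yl0 //.
have [_ [_ [_ [vac _]]]] := HY.
rewrite vac; case: eqP => _; last by rewrite (pi0 sub span indep).
by rewrite (pi_homog sub span indep v0) (negbTE g0).
Qed.

Lemma scale_inj (a b : C) (w : V) : a *: w = b *: w -> w != 0 -> a = b.
Proof.
move=> E w0; have : (a - b) *: w = 0 by rewrite scalerBl E subrr.
by move/eqP; rewrite scaler_eq0 (negbTE w0) orbF subr_eq0 => /eqP.
Qed.

Lemma Ybar_pi_zero g h k u v n : Vg g u -> Vg h v -> g + h != k -> PI k (Ybar u n v) = 0.
Proof.
move=> ug vh ne; have := Hfus g h k; rewrite (negbTE ne) => -[B [_ [_ Hall]]].
have [cc Hc] := Hall _ (IZ_intw sub span indep grY om0 HY HZ agree g h k).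
by have := Hc u n%:~R v ug vh; rewrite big_ord0 IZ_int.
Qed.

Lemma Ybar_gr g h u v n : Vg g u -> Vg h v -> Vg (g + h) (Ybar u n v).
Proof.
move=> ug vh; apply: (pi_char (sub := sub) (span := span)) => k kne.
by apply: (Ybar_pi_zero n ug vh); rewrite eq_sym.
Qed.

Lemma exists_c g h : exists a : C, a != 0 /\
  forall u v n, Vg g u -> Vg h v -> Ybar u n v = a *: Y u n v.
Proof.
have := Hfus g h (g + h); rewrite eqxx => -[B [_ [_ Hall]]].
have [cY HcY] := Hall _ (IZ_intw sub span indep grY om0 HY HY (fun _ _ _ _ => erefl) g h (g + h)).
have [cZ HcZ] := Hall _ (IZ_intw sub span indep grY om0 HY HZ agree g h (g + h)).
have EY : forall u v n, Vg g u -> Vg h v -> Y u n v = cY ord0 *: B ord0 u n%:~R v.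
  move=> u v n ug vh; have := HcY u n%:~R v ug vh.
  by rewrite big_ord1 IZ_int (pi_homog sub span indep (grY n ug vh)) eqxx.
have EZ : forall u v n, Vg g u -> Vg h v -> Ybar u n v = cZ ord0 *: B ord0 u n%:~R v.
  move=> u v n ug vh; have := HcZ u n%:~R v ug vh.
  by rewrite big_ord1 IZ_int (pi_homog sub span indep (Ybar_gr n ug vh)) eqxx.
have [u0 [u0g u0n]] := Hne g; have [v0 [v0h v0n]] := Hne h.
have [n0 Hn0] := nonvanish HsY u0n v0n.
have [n1 Hn1] := nonvanish HsZ u0n v0n.
have cY0 : cY ord0 != 0 by apply/eqP => E; apply: Hn0; rewrite EY // E scale0r.
have cZ0 : cZ ord0 != 0 by apply/eqP => E; apply: Hn1; rewrite EZ // E scale0r.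
exists (cZ ord0 / cY ord0); split; first by rewrite mulf_neq0 ?invr_neq0.
by move=> u v n ug vh; rewrite EZ // EY // scalerA mulfVK.
Qed.

Definition cc g h := proj1_sig (cid (exists_c g h)).
Lemma cc_spec g h : cc g h != 0 /\
  forall u v n, Vg g u -> Vg h v -> Ybar u n v = cc g h *: Y u n v.
Proof. exact: (proj2_sig (cid (exists_c g h))). Qed.
Lemma cc_neq0 g h : cc g h != 0. Proof. exact: (proj1 (cc_spec g h)). Qed.
Lemma ccE g h u v n : Vg g u -> Vg h v -> Ybar u n v = cc g h *: Y u n v.
Proof. exact: (proj2 (cc_spec g h)). Qed.

Lemma cc0 g : cc g 0 = 1.
Proof.
have [u [ug un]] := Hne g.
have [_ [_ [_ [_ [creZ _]]]]] := HZ; have [_ [_ [_ [_ [creY _]]]]] := HY.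
have := ccE (-1) ug one0; rewrite (proj2 (creZ u)) (proj2 (creY u)) => E.
by apply: (scale_inj (w := u)); [rewrite -E scale1r|apply/eqP].
Qed.

Lemma ccsym g h : cc g h = cc h g.
Proof.
have [u [ug un]] := Hne g; have [w [wh wn]] := Hne h.
have [n Hn] := nonvanish HsY wn un.
have [_ [_ [trunc _]]] := HY.
have [N0 HN0] := trunc u w.
set M := (`|N0 - n|%N).+1.
have HMY : forall i, (M <= i)%N -> Y u (n + 1 + i%:Z) w = 0.
  by move=> i Mi; apply: HN0; lia.
have HMZ : forall i, (M <= i)%N -> Ybar u (n + 1 + i%:Z) w = 0.
  by move=> i Mi; rewrite (ccE _ ug wh) HMY // scaler0.
have EY := skew_id HY (isT : (0 < M)%N) HMY.
have EZ := skew_id HZ (isT : (0 < M)%N) HMZ.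
have LZ : \sum_(i < M) gbinom (-1) i *: Ybar (Ybar u (n + 1 + (i : nat)%:Z) w) (-1 + -1 - (i : nat)%:Z) one
   = cc g h *: \sum_(i < M) gbinom (-1) i *: Y (Y u (n + 1 + (i : nat)%:Z) w) (-1 + -1 - (i : nat)%:Z) one.
  rewrite scaler_sumr; apply: eq_bigr => i _.
  rewrite (ccE _ ug wh) (YZl HZ) (ccE _ (grY _ ug wh) one0) cc0 scale1r !scalerA.
  by rewrite mulrC.
rewrite LZ EY (ccE _ ug wh) (ccE _ wh ug) scalerBr in EZ.
move/addrI/oppr_inj: EZ => EZ.
apply: (scale_inj (w := (-1) ^ (n + 1) *: Y w n u)).
  by rewrite EZ !scalerA mulrC.
rewrite scaler_eq0 negb_or expfz_eq0 negb_and oppr_eq0 oner_eq0 orbT /=.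
by apply/eqP.
Qed.

Lemma cccoc g h l : cc g h * cc (g + h) l = cc h l * cc g (h + l).
Proof.
have [u [ug un]] := Hne g; have [v [vh vn]] := Hne h; have [w [wl wn]] := Hne l.
have [n1 Hn1] := nonvanish HsY un vn.
have [n0 [Hn0 Hmax]] := max_index HY (introN eqP Hn1).
have [j Hj] := nonvanish HsY (elimN eqP Hn0) wn.
have [_ [_ [trunc _]]] := HY.
have [Muw HMuw] := trunc u w.
set M := `|Muw|%N.
have Huw : forall i : nat, Y u (M%:Z + i%:Z) w = 0 by move=> i; apply: HMuw; lia.
set k := j - M%:Z.
have [Nvw HNvw] := trunc v w.
set L := (`|Nvw - k|%N).+1.
have Hvw : forall i, (L <= i)%N -> Y v (k + i%:Z) w = 0 by move=> i Li; apply: HNvw; lia.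
have EY := assoc_id HY (isT : (0 < L)%N) Huw Hmax Hvw.
have HuwZ : forall i : nat, Ybar u (M%:Z + i%:Z) w = 0.
  by move=> i; rewrite (ccE _ ug wl) Huw scaler0.
have HmaxZ : forall i : nat, (1 <= i)%N -> Ybar u (n0 + i%:Z) v = 0.
  by move=> i i1; rewrite (ccE _ ug vh) Hmax // scaler0.
have HvwZ : forall i, (L <= i)%N -> Ybar v (k + i%:Z) w = 0.
  by move=> i Li; rewrite (ccE _ vh wl) Hvw // scaler0.
have EZ := assoc_id HZ (isT : (0 < L)%N) HuwZ HmaxZ HvwZ.
rewrite (ccE _ ug vh) (YZl HZ) (ccE _ (grY _ ug vh) wl) in EZ.
have RZ : \sum_(i < L) ((-1) ^+ i * gbinom n0 i) *:
     Ybar u (M%:Z + n0 - (i : nat)%:Z) (Ybar v (k + (i : nat)%:Z) w)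
  = (cc h l * cc g (h + l)) *: \sum_(i < L) ((-1) ^+ i * gbinom n0 i) *:
     Y u (M%:Z + n0 - (i : nat)%:Z) (Y v (k + (i : nat)%:Z) w).
  rewrite scaler_sumr; apply: eq_bigr => i _.
  rewrite (ccE _ vh wl) (YZr HZ) (ccE _ ug (grY _ vh wl)) !scalerA.
  by congr (_ *: _); ring.
rewrite RZ -EY scalerA in EZ.
apply: (scale_inj EZ).
have -> : M%:Z + k = j by rewrite /k; lia.
by apply/eqP.
Qed.

Definition supp v : seq G := proj1_sig (cid (pi_decomp sub span v)).
Lemma supp_decomp v : decomp Vg v (fun g => PI g v) (supp v).
Proof. exact: (proj2_sig (cid (pi_decomp sub span v))). Qed.

Definition Fm (phi : G -> C) v := \sum_(g <- supp v) phi g *: PI g v.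

Lemma decomp_ext v f s t : decomp Vg v f s -> uniq t -> {subset s <= t} -> decomp Vg v f t.
Proof.
case=> us os iS es ut st; split => //.
- by move=> g gt; apply: os; apply: contra gt; apply: st.
- by rewrite es; apply/esym/sum_ext.
Qed.

Lemma Fm_decomp phi v f s : decomp Vg v f s -> Fm phi v = \sum_(g <- s) phi g *: f g.
Proof.
move=> d; have E := pi_eq sub span indep d.
rewrite /Fm (eq_bigr (fun g => phi g *: f g)) => [|g _]; last by rewrite E.
case: (supp_decomp v) => u1 o1 _ _; case: d => u2 o2 _ _.
apply: sum_indep => // g gn; first by rewrite -E o1 ?scaler0.
by rewrite o2 ?scaler0.
Qed.

Lemma Fm_lin phi a u v : Fm phi (a *: u + v) = a *: Fm phi u + Fm phi v.
Proof.
have d := decompD sub (decompZ sub a (supp_decomp u)) (supp_decomp v).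
set t := undup (supp u ++ supp v) in d.
have tu : uniq t by rewrite undup_uniq.
have du := decomp_ext (supp_decomp u) tu (fun x xs => etrans (mem_undup _ _) (etrans (mem_cat _ _ _) (introT orP (or_introl xs)))).
have dv := decomp_ext (supp_decomp v) tu (fun x xs => etrans (mem_undup _ _) (etrans (mem_cat _ _ _) (introT orP (or_intror xs)))).
rewrite (Fm_decomp phi d) (Fm_decomp phi du) (Fm_decomp phi dv).
rewrite scaler_sumr -big_split /=; apply: eq_bigr => g _.
by rewrite scalerDr !scalerA mulrC.
Qed.

Lemma Fm0 phi : Fm phi 0 = 0.
Proof. by rewrite (Fm_decomp phi (decomp0 sub)) big_nil. Qed.

Lemma Fm_sum phi (I : Type) (r : seq I) (F : I -> V) :
  Fm phi (\sum_(i <- r) F i) = \sum_(i <- r) Fm phi (F i).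
Proof.
elim: r => [|x r IH]; first by rewrite !big_nil Fm0.
by rewrite !big_cons; have := Fm_lin phi 1 (F x) (\sum_(j <- r) F j); rewrite !scale1r IH.
Qed.

Lemma Fm_homog phi k x : Vg k x -> Fm phi x = phi k *: x.
Proof. by move=> xk; rewrite (Fm_decomp phi (decomp1 sub xk)) big_cons big_nil eqxx addr0. Qed.

Lemma Fm_inv phi psi : (forall g, psi g * phi g = 1) -> cancel (Fm phi) (Fm psi).
Proof.
move=> H v; have d := supp_decomp v.
have d' : decomp Vg (Fm phi v) (fun g => phi g *: PI g v) (supp v).
  case: d => us os iS es; split => //.
  - by move=> g /os ->; rewrite scaler0.
  - by move=> g; apply: subspaceZ.
rewrite (Fm_decomp psi d').
under eq_bigr do rewrite scalerA H scale1r.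
by case: d => _ _ _ <-.
Qed.

Theorem main_iso : VOA_isomorphic Y Ybar one omega.
Proof.
have [phi [phin0 phiH]] := split_cocycle cc_neq0 cc0 ccsym cccoc.
have phi0 : phi 0 = 1.
  have := phiH 0 0; rewrite addr0 cc0 mul1r => E.
  by apply: (mulfI (phin0 0)); rewrite -E mulr1.
exists (Fm phi); split; [|split; [|split; [|split]]].
- exact: Fm_lin.
- exists (Fm (fun g => (phi g)^-1)).
    by apply: Fm_inv => g; rewrite mulVf.
  by apply: Fm_inv => g; rewrite mulfV.
- by rewrite (Fm_homog phi one0) phi0 scale1r.
- by rewrite (Fm_homog phi om0) phi0 scale1r.
move=> u n v.
have [_ _ _ eu] := supp_decomp u; have [_ _ _ ev] := supp_decomp v.
rewrite {1}eu {1}ev (Ysuml HY) (Fm_sum phi (supp u) (fun g => Y (PI g u) n (\sum_(h <- supp v) PI h v))).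
rewrite [in RHS]/Fm (Ysuml HZ).
apply: eq_bigr => g _.
rewrite (Ysumr HY) (Fm_sum phi (supp v) (fun h => Y (PI g u) n (PI h v))) (YZl HZ) (Ysumr HZ) scaler_sumr.
apply: eq_bigr => h _.
rewrite (Fm_homog phi (grY n (pi_in sub span g u) (pi_in sub span h v))).
rewrite (YZr HZ) (ccE _ (pi_in sub span g u) (pi_in sub span h v)) !scalerA phiH.
by congr (_ *: _); ring.
Qed.

End Main.

Theorem proposition5p3 (G : zmodType) (V : lmodType C)
    (Y Ybar : V -> int -> V -> V) (one omega : V) (Vg : G -> V -> Prop) :
  simple_VOA Y one omega ->
  graded_by Y omega Vg ->
  (forall g : G, exists v, Vg g v /\ v <> 0) ->
  (forall g h k : G,
      fusion_rule Y omega (Vg 0) (Vg g) (Vg h) (Vg k)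
        (if g + h == k then 1%N else 0%N)) ->
  simple_VOA Ybar one omega ->
  (forall u, Vg 0 u -> forall (n : int) (v : V), Ybar u n v = Y u n v) ->
  VOA_isomorphic Y Ybar one omega.
Proof.
move=> HsY HG Hne Hfus HsZ agree.
exact: (main_iso HsY HG Hne Hfus HsZ agree).
Qed.
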